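(* Let $S\subseteq\mathbb{N}^{\mathbb{N}}$ and let $n>0$ be an integer. Then $S$ is $\mathbf{\Sigma}^0_n$ (respectively $\mathbf{\Pi}^0_n$, $\mathbf{\Delta}^0_n$) if and only if there is a $\Sigma_n$ (respectively $\Pi_n$, $\Delta_n$) sentence $\phi$ of $\mathscr{L}_{\max}$ with $S=\{f\in\mathbb{N}^{\mathbb{N}}:\mathscr{M}_f\models\phi\}$.
   Context: Baire space $\mathbb{N}^{\mathbb{N}}$ carries the product of discrete topologies; $\mathbf{\Sigma}^0_n,\mathbf{\Pi}^0_n,\mathbf{\Delta}^0_n$ are the boldface Borel pointclasses. The language $\mathscr{L}_{\max}$ is the first-order language (with equality) having: a constant symbol $\overline{n}$ for each $n\in\mathbb{N}$; an $n$-ary function symbol $\tilde w$ for each $w:\mathbb{N}^n\to\mathbb{N}$; an $n$-ary predicate symbol $\tilde p$ for each $p\subseteq\mathbb{N}^n$; a special unary function symbol $\mathbf{f}$; and, for every $n$ and every $G:\mathbb{N}^n\times\mathbb{N}^{<\mathbb{N}}\to\mathbb{N}$, an $(n+1)$-ary function symbol $G\circ\mathbf{f}$. For $f\in\mathbb{N}^{\mathbb{N}}$, $\mathscr{M}_f$ is the structure with universe $\mathbb{N}$ interpreting $\overline n$ as $n$, $\tilde w$ as $w$, $\tilde p$ as $p$, $\mathbf f$ as $f$, and $G\circ\mathbf f$ as $(m_1,\dots,m_n,m)\mapsto G(m_1,\dots,m_n,f(0),\dots,f(m))$. Formula classes: ''quantifier-free'' means containing no quantifiers at all (not even bounded ones).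 $\Sigma_0=\Pi_0=\Delta_0$ is the set of quantifier-free formulas; $\Sigma_{n+1}=\{\exists x\,\phi:\phi\in\Pi_n\}$ and $\Pi_{n+1}=\{\forall x\,\phi:\phi\in\Sigma_n\}$; a formula is $\Delta_{n+1}$ if it is equivalent, in every structure $\mathscr{M}_f$ ($f\in\mathbb{N}^{\mathbb{N}}$), to some $\Sigma_{n+1}$ formula of $\mathscr{L}_{\max}$ and also to some $\Pi_{n+1}$ formula of $\mathscr{L}_{\max}$. *)

(* Defs.v *)
From Stdlib Require Import Arith List.
From Stdlib Require Fin.
Import ListNotations.

Definition Baire := nat -> nat.

(** Open sets of the product of discrete topologies: membership is witnessed
    by a finite initial segment. *)
Definition isOpen (S : Baire -> Prop) : Prop :=
  forall f, S f -> exists k, forall g, (forall i, i < k -> g i = f i) -> S g.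

(** boldSigma n S : S is Sigma^0_n (meaningful for n >= 1).
    Sigma^0_1 = open; Sigma^0_{k+2} = countable unions of Pi^0_{k+1} sets;
    Pi^0_n = complements of Sigma^0_n. *)
Fixpoint boldSigma (n : nat) (S : Baire -> Prop) : Prop :=
  match n with
  | 0 => False
  | 1 => isOpen S
  | S k => exists A : nat -> Baire -> Prop,
             (forall i, boldSigma k (fun f => ~ A i f)) /\
             (forall f, S f <-> exists i, A i f)
  end.

Definition boldPi (n : nat) (S : Baire -> Prop) : Prop :=
  boldSigma n (fun f => ~ S f).

Definition boldDelta (n : nat) (S : Baire -> Prop) : Prop :=
  boldSigma n S /\ boldPi n S.

(** N^n is represented as [Fin.t n -> nat]; N^{<N} as [list nat].
    Variables are named by natural numbers. *)
Inductive term : Type :=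
| TVar   : nat -> term
| TConst : nat -> term
| TFun   : forall n : nat, ((Fin.t n -> nat) -> nat) ->
             (Fin.t n -> term) -> term
| TF     : term -> term
| TGf    : forall n : nat, ((Fin.t n -> nat) -> list nat -> nat) ->
             (Fin.t n -> term) -> term -> term.

Inductive formula : Type :=
| FEq   : term -> term -> formula
| FPred : forall n : nat, ((Fin.t n -> nat) -> Prop) ->
            (Fin.t n -> term) -> formula
| FNot  : formula -> formula
| FAnd  : formula -> formula -> formula
| FOr   : formula -> formula -> formula
| FImp  : formula -> formula -> formula
| FEx   : nat -> formula -> formula
| FAll  : nat -> formula -> formula.

Fixpoint evalT (f : Baire) (env : nat -> nat) (t : term) : nat :=
  match t with
  | TVar x => env x
  | TConst c => c
  | TFun n w args => w (fun i => evalT f env (args i))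
  | TF t1 => f (evalT f env t1)
  | TGf n G args t1 =>
      G (fun i => evalT f env (args i)) (map f (seq 0 (S (evalT f env t1))))
  end.

Definition upd (env : nat -> nat) (x v : nat) : nat -> nat :=
  fun y => if Nat.eqb y x then v else env y.

Fixpoint sat (f : Baire) (env : nat -> nat) (phi : formula) : Prop :=
  match phi with
  | FEq t1 t2 => evalT f env t1 = evalT f env t2
  | FPred n p args => p (fun i => evalT f env (args i))
  | FNot a => ~ sat f env a
  | FAnd a b => sat f env a /\ sat f env b
  | FOr a b => sat f env a \/ sat f env b
  | FImp a b => sat f env a -> sat f env b
  | FEx x a => exists v, sat f (upd env x v) a
  | FAll x a => forall v, sat f (upd env x v) a
  end.

Fixpoint occT (x : nat) (t : term) : Prop :=
  match t with
  | TVar y => x = y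
  | TConst _ => False
  | TFun n _ args => exists i, occT x (args i)
  | TF t1 => occT x t1
  | TGf n _ args t1 => (exists i, occT x (args i)) \/ occT x t1
  end.

Fixpoint freeIn (x : nat) (phi : formula) : Prop :=
  match phi with
  | FEq t1 t2 => occT x t1 \/ occT x t2
  | FPred n _ args => exists i, occT x (args i)
  | FNot a => freeIn x a
  | FAnd a b | FOr a b | FImp a b => freeIn x a \/ freeIn x b
  | FEx y a | FAll y a => x <> y /\ freeIn x a
  end.

Definition sentence (phi : formula) : Prop := forall x, ~ freeIn x phi.

(** M_f |= phi for a sentence (the assignment is irrelevant for sentences). *)
Definition models (f : Baire) (phi : formula) : Prop := sat f (fun _ => 0) phi.

Fixpoint qf (phi : formula) : Prop :=
  match phi with
  | FEq _ _ | FPred _ _ _ => True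
  | FNot a => qf a
  | FAnd a b | FOr a b | FImp a b => qf a /\ qf b
  | FEx _ _ | FAll _ _ => False
  end.

Fixpoint SigmaF (n : nat) (phi : formula) : Prop :=
  match n with
  | 0 => qf phi
  | S k => match phi with FEx _ a => PiF k a | _ => False end
  end
with PiF (n : nat) (phi : formula) : Prop :=
  match n with
  | 0 => qf phi
  | S k => match phi with FAll _ a => SigmaF k a | _ => False end
  end.

Definition DeltaF (n : nat) (phi : formula) : Prop :=
  (exists psi, SigmaF n psi /\ forall f env, sat f env phi <-> sat f env psi) /\
  (exists chi, PiF n chi /\ forall f env, sat f env phi <-> sat f env chi).

(* Main.v *)
Require Import Defs.
From Stdlib Require Import Arith List Lia Classical ClassicalEpsilon Cantor FunctionalExtensionality.
Import ListNotations.

Definition agree (g f : Baire) k := forall i, i < k -> g i = f i.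

Lemma fin_bound : forall n (P : Fin.t n -> nat -> Prop),
  (forall i k k', k <= k' -> P i k -> P i k') ->
  (forall i, exists k, P i k) -> exists K, forall i, P i K.
Proof.
  induction n; intros P Hm H.
  - exists 0. intro i. apply (Fin.case0 (fun i => P i 0) i).
  - destruct (IHn (fun j => P (Fin.FS j))) as [K1 HK1].
    + intros; eauto.
    + intros; apply H.
    + destruct (H Fin.F1) as [k0 Hk0]. exists (max K1 k0).
      intro i. apply (Fin.caseS' i (fun i => P i (max K1 k0))).
      * eapply Hm; [|exact Hk0]; lia.
      * intro j. eapply Hm; [|apply HK1]; lia.
Qed.

Lemma map_agree : forall (f g : Baire) v, agree g f (S v) ->
  map g (seq 0 (S v)) = map f (seq 0 (S v)).
Proof.
  intros f g v H. apply map_ext_in. intros a Ha. apply in_seq in Ha. apply H. lia.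
Qed.

Lemma args_cont : forall n (t : Fin.t n -> term) f env,
  (forall i, exists k, forall g, agree g f k -> evalT g env (t i) = evalT f env (t i)) ->
  exists K, forall g, agree g f K -> (fun i => evalT g env (t i)) = (fun i => evalT f env (t i)).
Proof.
  intros n t f env H.
  destruct (fin_bound n (fun i k => forall g, agree g f k -> evalT g env (t i) = evalT f env (t i))) as [K HK].
  + intros i k k' Hk Hp g Hg. apply Hp. intros j Hj; apply Hg; lia.
  + exact H.
  + exists K. intros g Hg. apply functional_extensionality. intro i; apply HK; auto.
Qed.

Lemma agree_le : forall g f k k', k <= k' -> agree g f k' -> agree g f k.
Proof. intros g f k k' H H' i Hi; apply H'; lia. Qed.

Lemma term_cont : forall t f env, exists k, forall g, agree g f k ->
  evalT g env t = evalT f env t.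
Proof.
  induction t; intros f env; simpl.
  - exists 0; auto.
  - exists 0; auto.
  - destruct (args_cont n t f env (fun i => H i f env)) as [K HK].
    exists K. intros g Hg. rewrite (HK g Hg). reflexivity.
  - destruct (IHt f env) as [k Hk]. exists (max k (S (evalT f env t))).
    intros g Hg. rewrite (Hk g). apply Hg. lia. eapply agree_le; [|exact Hg]; lia.
  - destruct (args_cont n t f env (fun i => H i f env)) as [K HK].
    destruct (IHt f env) as [k Hk]. exists (max K (max k (S (evalT f env t0)))).
    intros g Hg. rewrite (HK g) by (eapply agree_le; [|exact Hg]; lia).
    rewrite (Hk g) by (eapply agree_le; [|exact Hg]; lia).
    pose proof (map_agree f g (evalT f env t0)) as Hm. simpl in Hm. rewrite Hm by (eapply agree_le; [|exact Hg]; lia). reflexivity.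
Qed.

Lemma qf_loc : forall a, qf a -> forall f env, exists k, forall g, agree g f k ->
  (sat g env a <-> sat f env a).
Proof.
  induction a; simpl; intros Hq f env; try contradiction.
  - destruct (term_cont t f env) as [k1 H1]; destruct (term_cont t0 f env) as [k2 H2].
    exists (max k1 k2). intros g Hg.
    rewrite (H1 g), (H2 g) by (eapply agree_le; [|exact Hg]; lia). tauto.
  - destruct (args_cont n t f env (fun i => term_cont (t i) f env)) as [K HK].
    exists K. intros g Hg. rewrite (HK g Hg). tauto.
  - destruct (IHa Hq f env) as [k Hk]. exists k. intros g Hg. rewrite (Hk g Hg); tauto.
  - destruct Hq as [Q1 Q2]. destruct (IHa1 Q1 f env) as [k1 H1]; destruct (IHa2 Q2 f env) as [k2 H2].
    exists (max k1 k2). intros g Hg.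
    rewrite (H1 g), (H2 g) by (eapply agree_le; [|exact Hg]; lia). tauto.
  - destruct Hq as [Q1 Q2]. destruct (IHa1 Q1 f env) as [k1 H1]; destruct (IHa2 Q2 f env) as [k2 H2].
    exists (max k1 k2). intros g Hg.
    rewrite (H1 g), (H2 g) by (eapply agree_le; [|exact Hg]; lia). tauto.
  - destruct Hq as [Q1 Q2]. destruct (IHa1 Q1 f env) as [k1 H1]; destruct (IHa2 Q2 f env) as [k2 H2].
    exists (max k1 k2). intros g Hg.
    rewrite (H1 g), (H2 g) by (eapply agree_le; [|exact Hg]; lia). tauto.
Qed.

Lemma sigma_ext : forall n (A B : Baire -> Prop), (forall f, A f <-> B f) ->
  boldSigma n A -> boldSigma n B.
Proof.
  intros [|[|n]] A B H; simpl.
  - auto.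
  - intros HA f Hf. apply H in Hf. destruct (HA f Hf) as [k Hk]. exists k.
    intros g Hg. apply H. auto.
  - intros [X [H1 H2]]. exists X. split; auto. intro f. rewrite <- H, H2. tauto.
Qed.

Lemma back : forall k φ env, (SigmaF (S k) φ -> boldSigma (S k) (fun f => sat f env φ)) /\
  (PiF (S k) φ -> boldPi (S k) (fun f => sat f env φ)).
Proof.
  induction k; intros φ env; split; intro H.
  - destruct φ; simpl in H; try contradiction. simpl.
    intros f [v Hv]. destruct (qf_loc φ H f (upd env n v)) as [k Hk].
    exists k. intros g Hg. exists v. apply Hk; auto.
  - destruct φ; simpl in H; try contradiction. unfold boldPi; simpl.
    intros f Hf. apply not_all_ex_not in Hf. destruct Hf as [v Hv].
    destruct (qf_loc φ H f (upd env n v)) as [k Hk].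
    exists k. intros g Hg Ha. apply Hv. apply (Hk g Hg). apply Ha.
  - destruct φ; try (simpl in H; contradiction).
    change (boldSigma (S (S k)) (fun f => exists v, sat f (upd env n v) φ)).
    exists (fun v f => sat f (upd env n v) φ). split.
    + intro i. apply (proj2 (IHk φ (upd env n i))). exact H.
    + tauto.
  - destruct φ; try (simpl in H; contradiction). unfold boldPi.
    change (boldSigma (S (S k)) (fun f => ~ forall v, sat f (upd env n v) φ)).
    exists (fun v f => ~ sat f (upd env n v) φ). split.
    + intro i. eapply sigma_ext; [|apply (proj1 (IHk φ (upd env n i))); exact H].
      intro f; simpl; tauto.
    + intro f. split. apply not_all_ex_not. intros [v Hv] Ha; apply Hv, Ha.
Qed.

Lemma evalT_env : forall t f env1 env2, (forall y, occT y t -> env1 y = env2 y) ->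
  evalT f env1 t = evalT f env2 t.
Proof.
  induction t; intros f env1 env2 He; simpl in *.
  - auto.
  - auto.
  - f_equal. apply functional_extensionality. intro i. apply H. intros y Hy; apply He; eauto.
  - f_equal. apply IHt. auto.
  - rewrite (IHt f env1 env2) by auto.
    f_equal. apply functional_extensionality. intro i. apply H. intros y Hy; apply He; eauto.
Qed.

Lemma sat_env : forall φ f env1 env2, (forall x, freeIn x φ -> env1 x = env2 x) ->
  (sat f env1 φ <-> sat f env2 φ).
Proof.
  induction φ; intros f env1 env2 He; simpl in *.
  - rewrite (evalT_env t f env1 env2), (evalT_env t0 f env1 env2) by auto. tauto.
  - replace (fun i => evalT f env1 (t i)) with (fun i => evalT f env2 (t i)). tauto.
    apply functional_extensionality. intro i. symmetry; apply evalT_env. intros y Hy; apply He; eauto.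
  - rewrite (IHφ f env1 env2) by auto. tauto.
  - rewrite (IHφ1 f env1 env2), (IHφ2 f env1 env2) by auto. tauto.
  - rewrite (IHφ1 f env1 env2), (IHφ2 f env1 env2) by auto. tauto.
  - rewrite (IHφ1 f env1 env2), (IHφ2 f env1 env2) by auto. tauto.
  - assert (Hu : forall v x, freeIn x φ -> upd env1 n v x = upd env2 n v x).
    { intros v x Hx; unfold upd; destruct (Nat.eqb_spec x n); auto. }
    split; intros [v Hv]; exists v; eapply IHφ; try exact Hv; intros x Hx; rewrite Hu; auto.
  - assert (Hu : forall v x, freeIn x φ -> upd env1 n v x = upd env2 n v x).
    { intros v x Hx; unfold upd; destruct (Nat.eqb_spec x n); auto. }
    split; intros Hv v; eapply IHφ; try exact (Hv v); intros x Hx; rewrite Hu; auto.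
Qed.

Fixpoint dual (φ : formula) : formula :=
  match φ with
  | FEx x a => FAll x (dual a)
  | FAll x a => FEx x (dual a)
  | _ => FNot φ
  end.

Lemma dual_sat : forall φ f env, sat f env (dual φ) <-> ~ sat f env φ.
Proof.
  induction φ; intros f env; simpl; try tauto.
  - setoid_rewrite IHφ. split. intros H [v Hv]. exact (H v Hv). intros H v Hv; eauto.
  - setoid_rewrite IHφ. split. intros [v Hv] H. exact (Hv (H v)).
    intro H. apply not_all_ex_not in H. exact H.
Qed.

Lemma dual_free : forall φ x, freeIn x (dual φ) <-> freeIn x φ.
Proof. induction φ; intros x; simpl; try tauto; rewrite IHφ; tauto. Qed.

Lemma dual_class : forall k φ, (SigmaF k φ -> PiF k (dual φ)) /\ (PiF k φ -> SigmaF k (dual φ)).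
Proof.
  induction k; intros φ; split; intro H.
  - destruct φ; simpl in *; tauto.
  - destruct φ; simpl in *; tauto.
  - destruct φ; try (simpl in H; contradiction). simpl. apply IHk. exact H.
  - destruct φ; try (simpl in H; contradiction). simpl. apply IHk. exact H.
Qed.

Definition pterm (t : term) (x : nat) : term :=
  TFun 2 (fun a => to_nat (a Fin.F1, a (Fin.FS Fin.F1)))
    (fun i => if Nat.eqb (proj1_sig (Fin.to_nat i)) 0 then t else TVar x).

Lemma pterm_eval : forall t x f env, evalT f env (pterm t x) = to_nat (evalT f env t, env x).
Proof. reflexivity. Qed.

Lemma pterm_occ : forall t x y, occT y (pterm t x) -> occT y t \/ y = x.
Proof.
  intros t x y [i Hi]. destruct (Nat.eqb (proj1_sig (Fin.to_nat i)) 0); simpl in Hi; auto.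
Qed.

Definition cylG (P : nat -> Baire -> Prop) (a : Fin.t 1 -> nat) (l : list nat) : nat :=
  if excluded_middle_informative
       (forall g, (forall i, i < length l -> g i = nth i l 0) -> P (a Fin.F1) g)
  then 1 else 0.

Lemma nth_map_seq : forall (f : Baire) m i, i < m -> nth i (map f (seq 0 m)) 0 = f i.
Proof.
  intros f m i Hi. rewrite nth_indep with (d' := f 0) by (rewrite length_map, length_seq; lia).
  rewrite map_nth, seq_nth by lia. reflexivity.
Qed.

Lemma tmpl : forall k (P : nat -> Baire -> Prop), (forall p, boldSigma (S k) (P p)) ->
  exists F : term -> formula, forall t, SigmaF (S k) (F t) /\
    (forall x, freeIn x (F t) -> occT x t) /\
    ((forall y, occT y t -> S k < y) -> forall f env, sat f env (F t) <-> P (evalT f env t) f).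
Proof.
  induction k; intros P HP.
  - exists (fun t => FEx 1 (FEq (TGf 1 (cylG P) (fun _ => t) (TVar 1)) (TConst 1))).
    intro t. split; [|split].
    + simpl; auto.
    + intros x Hx. simpl in Hx. destruct Hx as [Hx1 [[[_ Hx]|Hx]|Hx]]; auto; lia.
    + intros Ht f env.
      assert (Heq : forall v, evalT f (upd env 1 v) t = evalT f env t).
      { intro v. apply evalT_env. intros y Hy. unfold upd. destruct (Nat.eqb_spec y 1); auto. apply Ht in Hy. lia. }
      split.
      * intros [v Hv].
        change (cylG P (fun _ => evalT f (upd env 1 v) t) (map f (seq 0 (S v))) = 1) in Hv.
        rewrite Heq in Hv. unfold cylG in Hv.
        destruct (excluded_middle_informative _) as [Hc|Hc]; [|discriminate].
        apply Hc. intros i Hi. rewrite length_map, length_seq in Hi. symmetry. apply nth_map_seq. lia.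
      * intro Hf. destruct (HP (evalT f env t) f Hf) as [m Hm]. exists m.
        change (cylG P (fun _ => evalT f (upd env 1 m) t) (map f (seq 0 (S m))) = 1).
        rewrite Heq. unfold cylG.
        destruct (excluded_middle_informative _) as [Hc|Hc]; auto. exfalso; apply Hc.
        intros g Hg. apply Hm. intros i Hi. rewrite Hg by (rewrite length_map, length_seq; lia).
        apply nth_map_seq. lia.
  - assert (HA : exists A : nat -> nat -> Baire -> Prop, forall p,
       (forall i, boldSigma (S k) (fun f => ~ A p i f)) /\ (forall f, P p f <-> exists i, A p i f)).
    { exists (fun p => proj1_sig (constructive_indefinite_description _ (HP p))).
      intro p. exact (proj2_sig (constructive_indefinite_description _ (HP p))). }
    destruct HA as [A HA].
    destruct (IHk (fun q f => ~ A (fst (of_nat q)) (snd (of_nat q)) f)) as [F HF].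
    { intro q. apply HA. }
    exists (fun t => FEx (S (S k)) (dual (F (pterm t (S (S k)))))).
    intro t. destruct (HF (pterm t (S (S k)))) as [H1 [H2 H3]]. split; [|split].
    + change (PiF (S k) (dual (F (pterm t (S (S k)))))). apply dual_class. exact H1.
    + intros x Hx. simpl in Hx. destruct Hx as [Hx1 Hx]. apply dual_free, H2, pterm_occ in Hx.
      destruct Hx; auto; contradiction.
    + intros Ht f env.
      assert (H3' : forall v, sat f (upd env (S (S k)) v) (F (pterm t (S (S k)))) <->
                ~ A (evalT f env t) v f).
      { intro v. rewrite H3.
        - rewrite pterm_eval. rewrite cancel_of_to. simpl.
          unfold upd at 2. rewrite Nat.eqb_refl.
          rewrite (evalT_env t f _ env). tauto.
          intros y Hy. unfold upd. destruct (Nat.eqb_spec y (S (S k))); auto. apply Ht in Hy. lia.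
        - intros y Hy. apply pterm_occ in Hy. destruct Hy as [Hy|Hy]. apply Ht in Hy. lia. lia. }
      change ((exists v, sat f (upd env (S (S k)) v) (dual (F (pterm t (S (S k)))))) <-> P (evalT f env t) f).
      setoid_rewrite dual_sat. setoid_rewrite H3'. rewrite (proj2 (HA (evalT f env t)) f).
      split; intros [v Hv]; exists v; tauto.
Qed.

Lemma fwd_sigma : forall k (A : Baire -> Prop), boldSigma (S k) A ->
  exists phi, sentence phi /\ SigmaF (S k) phi /\ forall f, A f <-> models f phi.
Proof.
  intros k A HA. destruct (tmpl k (fun _ => A) (fun _ => HA)) as [F HF].
  destruct (HF (TConst 0)) as [H1 [H2 H3]]. exists (F (TConst 0)). split; [|split].
  - intros x Hx. exact (H2 x Hx).
  - exact H1.
  - intro f. unfold models. rewrite H3. tauto. simpl; tauto.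
Qed.

Lemma fwd_pi : forall k (A : Baire -> Prop), boldPi (S k) A ->
  exists phi, sentence phi /\ PiF (S k) phi /\ forall f, A f <-> models f phi.
Proof.
  intros k A HA. destruct (fwd_sigma k _ HA) as [phi [H1 [H2 H3]]].
  exists (dual phi). split; [|split].
  - intros x Hx. rewrite dual_free in Hx. exact (H1 x Hx).
  - apply dual_class. exact H2.
  - intro f. generalize (H3 f). unfold models. rewrite dual_sat. tauto.
Qed.

Theorem mainTheorem9 (S : Baire -> Prop) (n : nat) (hn : 0 < n) :
  (boldSigma n S <->
     exists phi, sentence phi /\ SigmaF n phi /\ forall f, S f <-> models f phi) /\
  (boldPi n S <->
     exists phi, sentence phi /\ PiF n phi /\ forall f, S f <-> models f phi) /\
  (boldDelta n S <->
     exists phi, sentence phi /\ DeltaF n phi /\ forall f, S f <-> models f phi).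
Proof.
  destruct n as [|k]; [lia|]. split; [|split].
  - split. apply fwd_sigma. intros [phi [_ [H2 H3]]].
    eapply sigma_ext; [|apply (proj1 (back k phi (fun _ => 0))); exact H2].
    intro f; rewrite H3; reflexivity.
  - split. apply fwd_pi. intros [phi [_ [H2 H3]]].
    eapply sigma_ext; [|apply (proj2 (back k phi (fun _ => 0))); exact H2].
    intro f; simpl; rewrite H3; reflexivity.
  - split.
    + intros [HS HP]. destruct (fwd_sigma k _ HS) as [phi [H1 [H2 H3]]].
      destruct (fwd_pi k _ HP) as [chi [K1 [K2 K3]]].
      exists phi. split; [|split]; auto. split.
      * exists phi. split; auto. tauto.
      * exists chi. split; auto. intros f env.
        rewrite (sat_env phi f env (fun _ => 0)) by (intros x Hx; destruct (H1 x Hx)).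
        rewrite (sat_env chi f env (fun _ => 0)) by (intros x Hx; destruct (K1 x Hx)).
        fold (models f phi). fold (models f chi). rewrite <- H3, <- K3. tauto.
    + intros [phi [_ [[[psi [P1 P2]] [chi [C1 C2]]] H3]]]. split.
      * eapply sigma_ext; [|apply (proj1 (back k psi (fun _ => 0))); exact P1].
        intro f; rewrite H3; unfold models; rewrite P2; reflexivity.
      * eapply sigma_ext; [|apply (proj2 (back k chi (fun _ => 0))); exact C1].
        intro f; simpl; rewrite H3; unfold models; rewrite C2; reflexivity.
Qed.
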